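(* Let $\lambda>0$, $A\in\mathbb{R}^{m\times n}$, $b\in\mathbb{R}^m$, let $q=q_1-q_2:\mathbb{R}^m\to[0,+\infty)$ where $q_1:\mathbb{R}^m\to\mathbb{R}$ is continuously differentiable with Lipschitz continuous gradient and $q_2:\mathbb{R}^m\to\mathbb{R}$ is convex and continuous, and let $\mathcal{X}\subseteq\mathbb{R}^n$ be a closed hyperrectangle (possibly unbounded) with $0\in\mathcal{X}$. Set $\Phi(x):=\lambda\frac{\|x\|_1^2}{\|x\|_2^2}+q(Ax-b)$ for $x\neq 0$ and $\nu^\star:=\inf\{\Phi(x):x\in\mathcal{X}\setminus\{0\}\}$, and assume $\nu^\star<\lambda+q(-b)$. Let $\{x^k:k\in\mathbb{N}\}$ be a minimizing sequence, i.e. $x^k\in\mathcal{X}\setminus\{0\}$ for all $k$ and $\lim_{k\to\infty}\Phi(x^k)=\nu^\star$. Then every accumulation point $x^\star$ of $\{x^k\}$ is an optimal solution, i.e. $x^\star\in\mathcal{X}\setminus\{0\}$ and $\Phi(x^\star)=\nu^\star$.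
   Context: A closed hyperrectangle is a set $\{x\in\mathbb{R}^n:\underline{x}\le x\le\overline{x}\}$ (componentwise) with $\underline{x}\in(\mathbb{R}\cup\{-\infty\})^n$, $\overline{x}\in(\mathbb{R}\cup\{+\infty\})^n$. The problem considered is $\min_{x\in\mathcal{X}}\Phi(x)$; an optimal solution is a point of $\mathcal{X}\setminus\{0\}$ at which $\Phi$ attains $\nu^\star$. The inequality $\nu^\star<\lambda+q(-b)$ is a standing assumption of the paper (it excludes the trivial solution $0$). *)

(* Defs.v *)
From HB Require Import structures.
From mathcomp Require Import all_boot all_order all_algebra.
From mathcomp Require Import boolp classical_sets reals constructive_ereal.
Set Implicit Arguments. Unset Strict Implicit. Unset Printing Implicit Defensive.
Import Order.TTheory GRing.Theory Num.Theory.
Local Open Scope ring_scope.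
Local Open Scope classical_set_scope.

Section Defs.
Variable R : realType.

Definition l1norm (n : nat) (x : 'cV[R]_n) : R := \sum_i `|x i 0|.
Definition l2norm (n : nat) (x : 'cV[R]_n) : R := Num.sqrt (\sum_i (x i 0) ^+ 2).
Definition dotv (n : nat) (u v : 'cV[R]_n) : R := \sum_i u i 0 * v i 0.

Definition Phi (m n : nat) (lam : R) (A : 'M[R]_(m, n)) (b : 'cV[R]_m)
  (q : 'cV[R]_m -> R) (x : 'cV[R]_n) : R :=
  lam * (l1norm x ^+ 2 / l2norm x ^+ 2) + q (A *m x - b).

Definition nu_star (m n : nat) (lam : R) (A : 'M[R]_(m, n)) (b : 'cV[R]_m)
  (q : 'cV[R]_m -> R) (X : set 'cV[R]_n) : R :=
  inf [set Phi lam A b q x | x in X `&` [set x | x != 0]].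

Definition closed_hyperrectangle (n : nat) (X : set 'cV[R]_n) : Prop :=
  exists lo hi : 'I_n -> \bar R,
    (forall i, lo i != +oo%E) /\ (forall i, hi i != -oo%E) /\
    X = [set x | forall i, (lo i <= (x i 0)%:E <= hi i)%E].

(* g is the gradient of f (Frechet derivative represented via the inner product) *)
Definition is_gradient (m : nat) (f : 'cV[R]_m -> R) (g : 'cV[R]_m -> 'cV[R]_m) : Prop :=
  forall x (eps : R), 0 < eps -> exists2 delta : R, 0 < delta &
    forall y, l2norm (y - x) < delta ->
      `|f y - f x - dotv (g x) (y - x)| <= eps * l2norm (y - x).

Definition lipschitz_map (m : nat) (g : 'cV[R]_m -> 'cV[R]_m) : Prop :=
  exists L : R, forall x y, l2norm (g x - g y) <= L * l2norm (x - y).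

(* continuously differentiable with Lipschitz continuous gradient
   (Lipschitz continuity of the gradient implies its continuity) *)
Definition C11 (m : nat) (f : 'cV[R]_m -> R) : Prop :=
  exists g, is_gradient f g /\ lipschitz_map g.

Definition convex_fun (m : nat) (f : 'cV[R]_m -> R) : Prop :=
  forall x y (t : R), 0 <= t <= 1 ->
    f (t *: x + (1 - t) *: y) <= t * f x + (1 - t) * f y.

Definition continuous_fun (m : nat) (f : 'cV[R]_m -> R) : Prop :=
  forall x (eps : R), 0 < eps -> exists2 delta : R, 0 < delta &
    forall y, l2norm (y - x) < delta -> `|f y - f x| < eps.

Definition seq_cvg (u : nat -> R) (l : R) : Prop :=
  forall eps : R, 0 < eps -> exists N, forall k, (N <= k)%N -> `|u k - l| < eps.

Definition accumulation_point (n : nat) (xk : nat -> 'cV[R]_n) (xs : 'cV[R]_n) : Prop :=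
  forall eps : R, 0 < eps -> forall N, exists2 k, (N <= k)%N & l2norm (xk k - xs) < eps.

End Defs.

(* Main.v *)
Require Import Defs.
From HB Require Import structures.
From mathcomp Require Import all_boot all_order all_algebra.
From mathcomp Require Import boolp classical_sets reals constructive_ereal.
From mathcomp Require Import topology normedtype.
From mathcomp Require Import lra.
Import Order.TTheory GRing.Theory Num.Theory.
Import numFieldNormedType.Exports.
Set Implicit Arguments. Unset Strict Implicit. Unset Printing Implicit Defensive.
Local Open Scope ring_scope.
Local Open Scope classical_set_scope.

Section H.
Variable R : realType.

Lemma sqr_sum_ge (I : Type) (r : seq I) (a : I -> R) :
  (forall i, 0 <= a i) -> \sum_(i <- r) a i ^+ 2 <= (\sum_(i <- r) a i) ^+ 2.
Proof.
move=> a0; elim: r => [|x r IH]; first by rewrite !big_nil expr0n.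
rewrite !big_cons sqrrD -addrA lerD2l; apply: (le_trans IH); rewrite lerDr.
apply: mulrn_wge0; apply: mulr_ge0 => //; exact: sumr_ge0.
Qed.

Lemma coord_le_l2 n (v : 'cV[R]_n) i : `|v i 0| <= l2norm v.
Proof.
rewrite /l2norm -sqrtr_sqr; apply: ler_wsqrtr.
rewrite (bigD1 i) //= lerDl; apply: sumr_ge0 => j _; exact: sqr_ge0.
Qed.

Lemma l2_ge0 n (v : 'cV[R]_n) : 0 <= l2norm v.
Proof. exact: sqrtr_ge0. Qed.

Lemma l2_le_l1 n (v : 'cV[R]_n) : l2norm v <= l1norm v.
Proof.
rewrite /l2norm /l1norm -[X in _ <= X]ger0_norm ?sumr_ge0 // -sqrtr_sqr.
apply: ler_wsqrtr; rewrite (eq_bigr (fun i => `|v i 0| ^+ 2)).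
  by apply: sqr_sum_ge => i.
by move=> i _; rewrite real_normK // num_real.
Qed.

Lemma l2_sqr n (v : 'cV[R]_n) : l2norm v ^+ 2 = \sum_i (v i 0) ^+ 2.
Proof. by rewrite /l2norm sqr_sqrtr // sumr_ge0 // => i _; exact: sqr_ge0. Qed.

Lemma l1_le n (v : 'cV[R]_n) : l1norm v <= n%:R * l2norm v.
Proof.
rewrite /l1norm; apply: le_trans (_ : _ <= \sum_(i < n) l2norm v) _.
  by apply: ler_sum => i _; exact: coord_le_l2.
by rewrite sumr_const card_ord mulr_natl.
Qed.

Lemma dot_le n (u v : 'cV[R]_n) : `|dotv u v| <= l1norm u * l2norm v.
Proof.
rewrite /dotv /l1norm mulr_suml; apply: le_trans (ler_norm_sum _ _ _) _.
apply: ler_sum => i _; rewrite normrM; apply: ler_wpM2l => //; exact: coord_le_l2.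
Qed.

Lemma mul_le m n (A : 'M[R]_(m, n)) (v : 'cV[R]_n) :
  l2norm (A *m v) <= (\sum_i \sum_j `|A i j|) * l2norm v.
Proof.
apply: (le_trans (l2_le_l1 _)); rewrite /l1norm mulr_suml; apply: ler_sum => i _.
rewrite mxE mulr_suml; apply: le_trans (ler_norm_sum _ _ _) _.
apply: ler_sum => j _; rewrite normrM; apply: ler_wpM2l => //; exact: coord_le_l2.
Qed.


Definition contl n (f : 'cV[R]_n -> R) (x0 : 'cV[R]_n) := forall eps : R, 0 < eps ->
  exists2 d : R, 0 < d & forall y, l2norm (y - x0) < d -> `|f y - f x0| < eps.

Lemma contl_cvg n (f : 'cV[R]_n -> R) x0 : contl f x0 -> f @ x0 --> f x0.
Proof.
move=> H; have FF : Filter (nbhs x0) by exact: nbhs_filter.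
suff K : forall e : R, 0 < e -> \forall t \near x0, `|f x0 - f t| < e.
  by apply/cvgrPdist_lt.
move=> e e0; have [d d0 Hd] := H e e0.
apply/nbhs_ballP; exists (d / n.+1%:R) => /=; first by rewrite divr_gt0.
move=> y [_ By]; rewrite distrC; apply: Hd.
apply: (le_lt_trans (l2_le_l1 _)); rewrite /l1norm.
apply: le_lt_trans (_ : _ <= \sum_(i < n) (d / n.+1%:R)) _.
  apply: ler_sum => i _; rewrite !mxE; apply: ltW; rewrite distrC; exact: By.
by rewrite sumr_const card_ord -[_ *+ n]mulr_natr -mulrA gtr_pMr // mulrC ltr_pdivrMr ?ltr0n // mul1r ltr_nat.
Qed.

Lemma cvg_contl n (f : 'cV[R]_n -> R) x0 : f @ x0 --> f x0 -> contl f x0.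
Proof.
move=> Hc e e0; have FF : Filter (nbhs x0) by exact: nbhs_filter.
move/cvgrPdist_lt: Hc => /(_ e e0) /nbhs_ballP [d /= d0 Hd].
exists d => // y Hy; rewrite distrC; apply: Hd; split => // i j.
rewrite (ord1 j) /ball /= -normrN opprB; apply: le_lt_trans Hy.
by have := coord_le_l2 (y - x0) i; rewrite !mxE.
Qed.

Lemma C11_contl m (q : 'cV[R]_m -> R) x : C11 q -> contl q x.
Proof.
move=> [g [Hg _]] e e0.
have [d1 d10 H1] := Hg x 1 ltr01.
have K0 : 0 < 1 + l1norm (g x).
  by apply: (lt_le_trans ltr01); rewrite lerDl sumr_ge0.
exists (Num.min d1 (e / (1 + l1norm (g x)))).
  by rewrite lt_min d10 divr_gt0.
move=> y; rewrite lt_min => /andP [Hy1 Hy2].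
have := H1 y Hy1; rewrite mul1r => Hle.
have Hd := dot_le (g x) (y - x).
apply: (le_lt_trans (_ : _ <= (1 + l1norm (g x)) * l2norm (y - x))).
  rewrite mulrDl mul1r.
  have -> : q y - q x = (q y - q x - dotv (g x) (y - x)) + dotv (g x) (y - x).
    by rewrite subrK.
  apply: (le_trans (ler_normD _ _)); exact: lerD.
by rewrite mulrC -ltr_pdivlMr.
Qed.

Lemma contl_comp m n (q : 'cV[R]_m -> R) (A : 'M[R]_(m, n)) b x0 :
  contl q (A *m x0 - b) -> contl (fun x => q (A *m x - b)) x0.
Proof.
move=> H e e0; have [d d0 Hd] := H e e0.
set C := \sum_i \sum_j `|A i j|.
have C0 : 0 <= C by apply: sumr_ge0 => i _; apply: sumr_ge0.
exists (d / (C + 1)); first by rewrite divr_gt0 // ltr_wpDl.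
move=> y Hy; apply: Hd.
have -> : A *m y - b - (A *m x0 - b) = A *m (y - x0).
  by rewrite mulmxBr opprB addrA subrK.
apply: (le_lt_trans (mul_le _ _)).
apply: (le_lt_trans (_ : _ <= C * (d / (C + 1)))).
  by apply: ler_wpM2l => //; apply: ltW.
rewrite mulrA ltr_pdivrMr ?ltr_wpDl //. by rewrite mulrDr mulr1 mulrC ltrDl.
Qed.

Lemma cvg_bigsum n (I : Type) (r : seq I) (F : I -> 'cV[R]_n -> R) x0 :
  (forall i, F i @ x0 --> F i x0) ->
  (fun x => \sum_(i <- r) F i x) @ x0 --> \sum_(i <- r) F i x0.
Proof.
move=> H; have FF : Filter (nbhs x0) by exact: nbhs_filter.
elim: r => [|a r IH].
  under eq_fun do rewrite big_nil; rewrite big_nil; exact: cvg_cst.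
under eq_fun do rewrite big_cons; rewrite big_cons; exact: cvgD.
Qed.


Lemma nz_coord n (x : 'cV[R]_n) : x != 0 -> exists i, x i 0 != 0.
Proof.
move=> /eqP nz; apply: contrapT => H; apply: nz; apply/matrixP => i j.
rewrite (ord1 j) mxE; apply/eqP; apply: contrapT => Hi; apply: H; by exists i; apply/negP.
Qed.

Lemma l2sq_gt0 n (x : 'cV[R]_n) : x != 0 -> 0 < l2norm x ^+ 2.
Proof.
move=> /nz_coord [i Hi]; rewrite l2_sqr (bigD1 i) //=.
apply: (lt_le_trans (_ : 0 < x i 0 ^+ 2)); first by rewrite lt0r sqr_ge0 sqrf_eq0 Hi.
by rewrite lerDl sumr_ge0 // => j _; exact: sqr_ge0.
Qed.

Lemma ratio_ge1 n (x : 'cV[R]_n) : x != 0 -> 1 <= l1norm x ^+ 2 / l2norm x ^+ 2.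
Proof.
move=> nz; have H0 := l2sq_gt0 nz.
rewrite ler_pdivlMr // mul1r l2_sqr /l1norm.
rewrite (eq_bigr (fun i => `|x i 0| ^+ 2)); first by apply: sqr_sum_ge.
by move=> i _; rewrite real_normK // num_real.
Qed.

Lemma coord_cvg n (i : 'I_n) (x0 : 'cV[R]_n) : (fun x : 'cV[R]_n => x i 0) @ x0 --> x0 i 0.
Proof.
apply: contl_cvg => e e0; exists e => // y Hy; apply: le_lt_trans Hy.
by have := coord_le_l2 (y - x0) i; rewrite !mxE.
Qed.

Lemma Phi_contl m n lam (A : 'M[R]_(m, n)) b q1 q2 xs :
  C11 q1 -> continuous_fun q2 -> xs != 0 ->
  contl (Phi lam A b (fun z => q1 z - q2 z)) xs.
Proof.
move=> H1 H2 nz; apply: cvg_contl; rewrite /Phi.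
have FF : Filter (nbhs xs) by exact: nbhs_filter.
have c1 : (@l1norm R n) @ xs --> l1norm xs.
  rewrite /l1norm; apply: cvg_bigsum => i; apply: cvg_norm; exact: coord_cvg.
have c2 : (fun x => l2norm x ^+ 2) @ xs --> l2norm xs ^+ 2.
  under eq_fun do rewrite l2_sqr; rewrite l2_sqr; apply: cvg_bigsum => i.
  under eq_fun do rewrite expr2; rewrite expr2; apply: cvgM; exact: coord_cvg.
have c3 : (fun x : 'cV[R]_n => (l2norm x ^+ 2)^-1) @ xs --> (l2norm xs ^+ 2)^-1.
  by apply: cvgV => //; rewrite gt_eqF // l2sq_gt0.
apply: cvgD.
  apply: cvgM; first exact: cvg_cst.
  apply: cvgM => //.
  under eq_fun do rewrite expr2; rewrite expr2; exact: cvgM.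
apply: cvgB; apply: contl_cvg; apply: contl_comp; first exact: C11_contl.
exact: H2.
Qed.


Lemma coord_dist n (x y : 'cV[R]_n) i : `|x i 0 - y i 0| <= l2norm (x - y).
Proof. by have := coord_le_l2 (x - y) i; rewrite !mxE. Qed.

Lemma h_contl m n (A : 'M[R]_(m, n)) b q1 q2 x0 :
  C11 q1 -> continuous_fun q2 ->
  contl (fun x => q1 (A *m x - b) - q2 (A *m x - b)) x0.
Proof.
move=> H1 H2; apply: cvg_contl.
have FF : Filter (nbhs x0) by exact: nbhs_filter.
apply: cvgB; apply: contl_cvg; apply: contl_comp; first exact: C11_contl.
exact: H2.
Qed.

Lemma closed_rect n (lo hi : 'I_n -> \bar R) (xk : nat -> 'cV[R]_n) xs :
  (forall i, lo i != +oo%E) -> (forall i, hi i != -oo%E) ->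
  (forall k i, (lo i <= (xk k i 0)%:E <= hi i)%E) ->
  accumulation_point xk xs ->
  forall i, (lo i <= (xs i 0)%:E <= hi i)%E.
Proof.
move=> Hlo Hhi Hk Hacc i; apply/andP; split.
  case E: (lo i) => [r| |].
  - rewrite lee_fin leNgt; apply/negP => Hlt.
    have Hp : 0 < r - xs i 0 by rewrite subr_gt0.
    have [k _ Hd] := Hacc _ Hp 0%N.
    have := le_lt_trans (coord_dist _ _ i) Hd.
    have /andP [] := Hk k i; rewrite E lee_fin => Hr _.
    rewrite ltr_norml => /andP [_ h]; clear -Hr h; lra.
  - by have := Hlo i; rewrite E.
  - exact: leNye.
case E: (hi i) => [r| |].
- rewrite lee_fin leNgt; apply/negP => Hlt.
  have Hp : 0 < xs i 0 - r by rewrite subr_gt0.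
  have [k _ Hd] := Hacc _ Hp 0%N.
  have := le_lt_trans (coord_dist _ _ i) Hd.
  have /andP [] := Hk k i; rewrite E lee_fin => _ Hr.
  rewrite ltr_norml => /andP [h _]; clear -Hr h; lra.
- exact: leey.
- by have := Hhi i; rewrite E.
Qed.

End H.

Theorem lemma3p1 (R : realType) (m n : nat) (lam : R) (A : 'M[R]_(m, n))
  (b : 'cV[R]_m) (q1 q2 : 'cV[R]_m -> R) (X : set 'cV[R]_n)
  (xk : nat -> 'cV[R]_n) (xs : 'cV[R]_n) :
  0 < lam ->
  C11 q1 ->
  convex_fun q2 -> continuous_fun q2 ->
  (forall z, 0 <= q1 z - q2 z) ->
  closed_hyperrectangle X -> X 0 ->
  nu_star lam A b (fun z => q1 z - q2 z) X < lam + (q1 (- b) - q2 (- b)) ->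
  (forall k, X (xk k) /\ xk k != 0) ->
  seq_cvg (fun k => Phi lam A b (fun z => q1 z - q2 z) (xk k))
          (nu_star lam A b (fun z => q1 z - q2 z) X) ->
  accumulation_point xk xs ->
  [/\ X xs, xs != 0 &
      Phi lam A b (fun z => q1 z - q2 z) xs = nu_star lam A b (fun z => q1 z - q2 z) X].
Proof.
move=> lam0 H1 _ H2 _ [lo [hi [Hlo [Hhi EX]]]] _.
set nu := nu_star _ _ _ _ X => Hnu Hk Hcvg Hacc.
have nz : xs != 0.
  apply/negP => /eqP E; subst xs.
  set d := lam + (q1 (- b) - q2 (- b)) - nu.
  have d0 : 0 < d by rewrite subr_gt0.
  have d2 : 0 < d / 2 by rewrite divr_gt0.
  have [de de0 Hde] := h_contl A b 0 H1 H2 d2.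
  have [N HN] := Hcvg _ d2.
  have [k Nk Hk'] := Hacc de de0 N.
  have := Hde _ Hk'; rewrite mulmx0 sub0r => Hh.
  have := HN k Nk; rewrite /Phi => HP.
  have r1 := ratio_ge1 (Hk k).2.
  have r2 : lam <= lam * (l1norm (xk k) ^+ 2 / l2norm (xk k) ^+ 2).
    by rewrite ler_pMr.
  move: Hh HP; rewrite !ltr_norml => /andP [h1 _] /andP [_ h2].
  rewrite /d in h1 h2; lra.
split => //.
- rewrite EX /=; apply: (closed_rect Hlo Hhi _ Hacc).
  by move=> k i; have [] := Hk k; rewrite EX /= => /(_ i).
- apply/eqP; rewrite -subr_eq0; apply: contrapT => ne.
  set e := `|Phi lam A b (fun z => q1 z - q2 z) xs - nu|.
  have e0 : 0 < e by rewrite /e normr_gt0; apply/negP.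
  have e2 : 0 < e / 2 by rewrite divr_gt0.
  have [de de0 Hde] := Phi_contl lam A b H1 H2 nz e2.
  have [N HN] := Hcvg _ e2.
  have [k Nk Hk'] := Hacc de de0 N.
  have h1 := Hde _ Hk'; have h2 := HN k Nk.
  have := ler_distD (Phi lam A b (fun z => q1 z - q2 z) (xk k))
     (Phi lam A b (fun z => q1 z - q2 z) xs) nu.
  rewrite -/e distrC => h3.
  move: h1 h2 h3; set u := `|_ - _|; set v := `|_ - _| => h1 h2 h3; lra.
Qed.
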